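(* Let $u\neq0$ and $v$ be parameters and let $f(x,u)=\sum_{n\ge0}u^{\binom{n}{2}}a_nx^n$ be a formal power series. Define $f_{s,t}(x\oplus_{u,v}y)=\sum_{n\ge0}a_n(x\oplus_{u,v}y)^{(n)}_{s,t}=\sum_{n\ge0}a_n\sum_{k=0}^{n}\left\{{n\atop k}\right\}_{s,t}v^{\binom{k}{2}}u^{\binom{n-k}{2}}y^kx^{n-k}$. Then, as formal power series in $x,y$, $$f_{s,t}(x\oplus_{u,v}y)=\sum_{n\ge0}v^{\binom{n}{2}}\frac{y^n}{\{n\}_{s,t}!}\,(\mathrm{T}_{u^{-1}}\mathbf{D}_{s,t})^{n}f(x,u),$$ where the operators act on the variable $x$.
   Context: Let $s,t$ be nonzero reals with $s^2+4t\neq0$, $\varphi=\frac{s+\sqrt{s^2+4t}}{2}$, $\varphi'=\frac{s-\sqrt{s^2+4t}}{2}$, $\{n\}_{s,t}=\frac{\varphi^n-\varphi'^n}{\varphi-\varphi'}$, $\{n\}_{s,t}!=\{1\}_{s,t}\cdots\{n\}_{s,t}$ ($\{0\}_{s,t}!=1$), $\left\{{n\atop k}\right\}_{s,t}=\frac{\{n\}_{s,t}!}{\{k\}_{s,t}!\{n-k\}_{s,t}!}$, and $\binom{\beta}{2}=\beta(\beta-1)/2$. The $(s,t)$-derivative acts on power series by $\mathbf{D}_{s,t}x^m=\{m\}_{s,t}x^{m-1}$ (termwise), and $\mathrm{T}_a$ is the dilation $\mathrm{T}_af(x)=f(ax)$. The deformed binomial polynomial is $(x\oplus_{u,v}y)_{s,t}^{(n)}=\sum_{k=0}^n\left\{{n\atop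 k}\right\}_{s,t}u^{\binom{n-k}{2}}v^{\binom{k}{2}}x^{n-k}y^k$. *)

(* Defs.v *)
From HB Require Import structures.
From mathcomp Require Import all_boot all_order all_algebra.
From mathcomp Require Import complex.
Set Implicit Arguments. Unset Strict Implicit. Unset Printing Implicit Defensive.
Import Order.TTheory GRing.Theory Num.Theory.
Local Open Scope ring_scope.
Local Open Scope complex_scope.

Section Defs.
Variable R : rcfType.
Local Notation C := R[i].
Variables s t : R.

Definition disc : C := (s ^+ 2 + 4%:R * t)%:C.
Definition phi  : C := (s%:C + sqrtC disc) / 2%:R.
Definition phi' : C := (s%:C - sqrtC disc) / 2%:R.

Definition stnum (n : nat) : C := (phi ^+ n - phi' ^+ n) / (phi - phi').

Definition stfact (n : nat) : C := \prod_(1 <= k < n.+1) stnum k.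

Definition stbinom (n k : nat) : C :=
  stfact n / (stfact k * stfact (n - k)).

Definition b2 (b : nat) : nat := 'C(b, 2).

(* Formal power series in one variable x: coefficient sequences nat -> C.
   Formal power series in x,y: c i j = coefficient of x^i y^j. *)
Definition fps := nat -> C.
Definition fps2 := nat -> nat -> C.

(* (s,t)-derivative: D x^m = {m} x^(m-1), so coefficient of x^m in D g is
   {m+1} * (coefficient of x^(m+1) in g). *)
Definition Dst (g : fps) : fps := fun m => stnum m.+1 * g m.+1.

(* dilation T_a g(x) = g(a x) *)
Definition Tdil (a : C) (g : fps) : fps := fun m => a ^+ m * g m.

(* deformed binomial polynomial (x (+)_{u,v} y)^{(n)}_{s,t}, as a polynomial
   in x,y: coefficient of x^i y^j *)
Definition oplus_poly (u v : C) (n : nat) : fps2 := fun i j =>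
  if i + j == n then stbinom n j * u ^+ b2 i * v ^+ b2 j else 0.

Definition fxu (u : C) (a : nat -> C) : fps := fun n => u ^+ b2 n * a n.

(* f_{s,t}(x (+)_{u,v} y) = sum_n a_n (x (+)_{u,v} y)^{(n)}: the coefficient of
   x^i y^j only receives contributions from n <= i + j (polynomial of degree n) *)
Definition f_oplus (u v : C) (a : nat -> C) : fps2 := fun i j =>
  \sum_(n < (i + j).+1) a n * oplus_poly u v n i j.

Definition rhs_series (u v : C) (a : nat -> C) : fps2 := fun i j =>
  v ^+ b2 j / stfact j * iter j (fun g => Tdil u^-1 (Dst g)) (fxu u a) i.

End Defs.

(* Main.v *)
Require Import Defs.
From HB Require Import structures.
From mathcomp Require Import all_boot all_order all_algebra.
From mathcomp Require Import complex.
From mathcomp Require Import ring.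
From Stdlib Require Import FunctionalExtensionality.
Import Order.TTheory GRing.Theory Num.Theory.
Local Open Scope ring_scope.

Lemma stfactS (R : rcfType) (s t : R) m : stfact s t m.+1 = stfact s t m * stnum s t m.+1.
Proof. by rewrite /stfact big_nat_recr. Qed.

Lemma stfact_neq0 (R : rcfType) (s t : R)
  (hnum : forall n : nat, (0 < n)%N -> stnum s t n != 0) m : stfact s t m != 0.
Proof.
elim: m => [|m IH]; first by rewrite /stfact big_geq // oner_neq0.
by rewrite stfactS mulf_neq0 // hnum.
Qed.

Lemma b2S m : b2 m.+1 = (b2 m + m)%N.
Proof. by rewrite /b2 binS bin1. Qed.

Theorem mainTheorem4 (R : rcfType) (s t : R)
  (hs : s != 0) (ht : t != 0) (hdisc : s ^+ 2 + 4%:R * t != 0)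
  (hnum : forall n : nat, (0 < n)%N -> stnum s t n != 0)
  (u v : R[i]) (hu : u != 0) (a : nat -> R[i]) :
  f_oplus s t u v a = rhs_series s t u v a.
Proof.
have nz := @stfact_neq0 R s t hnum.
have G : forall k m, iter k (fun g => Tdil u^-1 (Dst s t g)) (fxu u a) m
   = u ^+ b2 m * (stfact s t (m + k) / stfact s t m) * a (m + k)%N.
  elim => [|k IH] m.
    by rewrite /= addn0 divff // mulr1.
  rewrite iterS /Tdil /Dst IH b2S exprD stfactS addSnnS.
  rewrite exprVn; field.
  by rewrite nz hnum // expf_neq0.
apply: functional_extensionality => i; apply: functional_extensionality => j.
rewrite /f_oplus /rhs_series G.
rewrite (bigD1 (Ordinal (ltnSn (i + j)))) // big1; last first.
  move=> k /eqP Hk; rewrite /oplus_poly.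
  case: eqP => [E|]; last by rewrite mulr0.
  by exfalso; apply: Hk; apply: val_inj => /=.
rewrite [X in X = _]/= addr0 /oplus_poly eqxx /stbinom addnK.
set A := stfact _ _ _; set B := stfact _ _ j; set D := stfact _ _ i.
rewrite invfM; ring.
Qed.
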